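(* Let $\models$ be an intersective mixed consequence truth-relation on a finite set $V$ of truth values, with induced consequence relation $\vdash$ in a constant expressive setting. The following are equivalent: (i) $\vdash$ admits a G-conjunction; (ii) every minimal representation of $\models$ is based on a conjunction-compatible list of sets of designated values; (iii) some representation of $\models$ is based on a conjunction-compatible list of sets of designated values.
   Context: $V$ contains distinct $1,0$; sets of designated values: $\mathcal{D}\subseteq V$, $1\in\mathcal{D}$, $0\notin\mathcal{D}$. $\gamma\models_{\mathcal{D}_p,\mathcal{D}_c}\delta$ iff ($\gamma\subseteq\mathcal{D}_p\Rightarrow\delta\cap\mathcal{D}_c\neq\emptyset$). An intersective mixed truth-relation is $\models_{\mathcal{D}_p^1,\mathcal{D}_c^1}\cap\dots\cap\models_{\mathcal{D}_p^K,\mathcal{D}_c^K}$; such a list is a representation, based on the list of sets $\mathcal{D}_p^1,\mathcal{D}_c^1,\dots,\mathcal{D}_p^K,\mathcal{D}_c^K$; it is minimal if $K$ is least possible. A list $\mathcal{D}_1,\dots,\mathcal{D}_n$ is conjunction-compatible if for all $x,y\in V$ there is $z\in V$ such that for every $i$: $z\in\mathcal{D}_i$ iff ($x\in\mathcal{D}_i$ and $y\in\mathcal{D}_i$). Semantics: valuations mapping atoms to $V$, connectives interpreted by fixed truth functions, extended compositionally, every assignment to finitely many distinct atoms realized; constant expressive: every value is the constant value of some formula. $\Gamma\vdash\Delta$ iff $v(\Gamma)\models v(\Delta)$ for all $v$. A G-conjunction is a binary connective $\wedge$ (interpreted by some truth function) with, for all $\Gamma,\Delta,A,B$: $\Gamma\cup\{A\wedge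 B\}\vdash\Delta$ iff $\Gamma\cup\{A,B\}\vdash\Delta$; and $\Gamma\vdash\{A\wedge B\}\cup\Delta$ iff ($\Gamma\vdash\{A\}\cup\Delta$ and $\Gamma\vdash\{B\}\cup\Delta$). *)

(* Defs.v *)
From mathcomp Require Import all_boot.
From mathcomp Require Import boolp.
Set Implicit Arguments. Unset Strict Implicit. Unset Printing Implicit Defensive.

Section Semantics.
Variable V : finType.

Definition designated (one zero : V) (D : {set V}) : Prop :=
  one \in D /\ zero \notin D.

Definition mixed_tr (Dp Dc : {set V}) (g d : {set V}) : Prop :=
  g \subset Dp -> d :&: Dc != set0.

Definition is_rep (one zero : V) (models : {set V} -> {set V} -> Prop)
    (L : seq ({set V} * {set V})) : Prop :=
  [/\ 0 < size L,
      (forall p, p \in L -> designated one zero p.1 /\ designated one zero p.2)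
    & forall g d, models g d <-> (forall p, p \in L -> mixed_tr p.1 p.2 g d)].

Definition intersective (one zero : V) (models : {set V} -> {set V} -> Prop) :=
  exists L, is_rep one zero models L.

Definition minimal_rep (one zero : V) (models : {set V} -> {set V} -> Prop)
    (L : seq ({set V} * {set V})) : Prop :=
  is_rep one zero models L /\
  forall L', is_rep one zero models L' -> size L <= size L'.

(* the list of sets Dp^1, Dc^1, ..., Dp^K, Dc^K on which L is based *)
Definition sets_of (L : seq ({set V} * {set V})) : seq {set V} :=
  flatten [seq [:: p.1; p.2] | p <- L].

Definition conj_compatible (Ds : seq {set V}) : Prop :=
  forall x y : V, exists z : V,
    forall i, i < size Ds ->
      (z \in nth set0 Ds i) = (x \in nth set0 Ds i) && (y \in nth set0 Ds i).

Inductive form (C : Type) (ar : C -> nat) : Type :=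
  | Atom of nat
  | App (c : C) of ('I_(ar c) -> form ar).

Fixpoint eval (C : Type) (ar : C -> nat)
    (interp : forall c : C, ('I_(ar c) -> V) -> V) (v : nat -> V)
    (A : form ar) {struct A} : V :=
  match A with
  | Atom n => v n
  | App c args => interp c (fun i => eval interp v (args i))
  end.

Definition constant_expressive (C : Type) (ar : C -> nat)
    (interp : forall c : C, ('I_(ar c) -> V) -> V) : Prop :=
  forall x : V, exists A : form ar, forall v : nat -> V, eval interp v A = x.

Definition img (C : Type) (ar : C -> nat)
    (interp : forall c : C, ('I_(ar c) -> V) -> V) (v : nat -> V)
    (G : form ar -> Prop) : {set V} :=
  [set x : V | `[< exists A, G A /\ eval interp v A = x >]].

Definition cons (C : Type) (ar : C -> nat)
    (interp : forall c : C, ('I_(ar c) -> V) -> V)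
    (models : {set V} -> {set V} -> Prop) (G D : form ar -> Prop) : Prop :=
  forall v : nat -> V, models (img interp v G) (img interp v D).

Definition addf (T : Type) (G : T -> Prop) (A : T) : T -> Prop :=
  fun X => G X \/ X = A.

Definition ext_ar (C : Type) (ar : C -> nat) (o : option C) : nat :=
  match o with Some c => ar c | None => 2 end.

Definition ext_interp (C : Type) (ar : C -> nat)
    (interp : forall c : C, ('I_(ar c) -> V) -> V) (f : V -> V -> V) :
    forall o : option C, ('I_(ext_ar ar o) -> V) -> V :=
  fun o => match o return ('I_(ext_ar ar o) -> V) -> V with
           | Some c => interp c
           | None => fun a => f (a ord0) (a ord_max)
           end.

Definition conjf (C : Type) (ar : C -> nat) (A B : form (ext_ar ar)) :
    form (ext_ar ar) :=
  @App _ (ext_ar ar) None (fun i : 'I_2 => if i == ord0 then A else B).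

Definition is_Gconj (C : Type) (ar : C -> nat)
    (interp : forall c : C, ('I_(ar c) -> V) -> V)
    (models : {set V} -> {set V} -> Prop) (f : V -> V -> V) : Prop :=
  let I := ext_interp interp f in
  forall (G D : form (ext_ar ar) -> Prop) (A B : form (ext_ar ar)),
    (cons I models (addf G (conjf A B)) D <->
       cons I models (addf (addf G A) B) D) /\
    (cons I models G (addf D (conjf A B)) <->
       (cons I models G (addf D A) /\ cons I models G (addf D B))).

Definition admits_Gconj (C : Type) (ar : C -> nat)
    (interp : forall c : C, ('I_(ar c) -> V) -> V)
    (models : {set V} -> {set V} -> Prop) : Prop :=
  exists f : V -> V -> V, is_Gconj interp models f.

End Semantics.

(* Main.v *)
Require Import Defs.
From mathcomp Require Import all_boot.
From mathcomp Require Import boolp.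
From Stdlib Require Import Classical_Prop Classical_Pred_Type.
Set Implicit Arguments. Unset Strict Implicit. Unset Printing Implicit Defensive.

Definition ML (V : finType) (L : seq ({set V} * {set V})) (g d : {set V}) :=
  forall p, p \in L -> mixed_tr p.1 p.2 g d.

Lemma sub1U (V : finType) (x : V) (g P : {set V}) :
  (x |: g \subset P) = (x \in P) && (g \subset P).
Proof. by rewrite subUset sub1set. Qed.

Lemma I1U (V : finType) (x : V) (d P : {set V}) :
  (setI (setU [set x] d) P != set0) = (x \in P) || (setI d P != set0).
Proof.
apply/idP/idP.
  case/set0Pn=> u; rewrite !inE => /andP[/orP[/eqP-> ->//|ud uP]].
  by apply/orP; right; apply/set0Pn; exists u; rewrite inE ud uP.
case/orP=> [xP|/set0Pn[u]]; first by apply/set0Pn; exists x; rewrite !inE eqxx xP.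
by rewrite inE => /andP[ud uP]; apply/set0Pn; exists u; rewrite !inE ud uP orbT.
Qed.

Lemma sets_ofP (V : finType) (L : seq ({set V} * {set V})) D :
  D \in sets_of L <-> exists2 p, p \in L & (D = p.1 \/ D = p.2).
Proof.
elim: L => [|q L IH]; first by split=> // -[].
rewrite /sets_of /= !inE -/(sets_of L).
split.
  case/orP=> [/eqP->|/orP[/eqP->|/(proj1 IH)[p pL H]]].
  - by exists q; rewrite ?inE ?eqxx //; left.
  - by exists q; rewrite ?inE ?eqxx //; right.
  by exists p; rewrite // inE pL orbT.
case=> p; rewrite inE => /orP[/eqP pq|pL] E.
  by subst p; case: E => ->; rewrite eqxx ?orbT.
by apply/orP; right; apply/orP; right; apply/(proj2 IH); exists p.
Qed.

Lemma cc_sets (V : finType) (L : seq ({set V} * {set V})) :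
  conj_compatible (sets_of L) <->
  forall x y : V, exists z : V, forall p, p \in L ->
     (z \in p.1) = (x \in p.1) && (y \in p.1) /\ (z \in p.2) = (x \in p.2) && (y \in p.2).
Proof.
split.
  move=> H x y; case: (H x y) => z Hz; exists z => p pL.
  have h D : D \in sets_of L -> (z \in D) = (x \in D) && (y \in D).
    by move=> DL; rewrite -(nth_index set0 DL); apply: Hz; rewrite index_mem.
  by split; apply: h; apply/sets_ofP; exists p => //; [left|right].
move=> H x y; case: (H x y) => z Hz; exists z => i iL.
have /sets_ofP[p pL [->|->]] := mem_nth set0 iL; by case: (Hz p pL).
Qed.

Fixpoint emb (C : Type) (ar : C -> nat) (A : form ar) : form (ext_ar ar) :=
  match A with
  | Atom n => @Atom _ (ext_ar ar) n
  | App c args => @App _ (ext_ar ar) (Some c) (fun i => emb (args i))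
  end.

Lemma eval_emb (V : finType) (C : Type) (ar : C -> nat)
  (interp : forall c : C, ('I_(ar c) -> V) -> V) f v (A : form ar) :
  eval (ext_interp interp f) v (emb A) = eval interp v A.
Proof.
elim: A => [n|c args IH] //=.
by congr (interp c _); apply: funext => i; apply: IH.
Qed.

Lemma img_addf (V : finType) (C : Type) (ar : C -> nat)
  (interp : forall c : C, ('I_(ar c) -> V) -> V) v G A :
  img interp v (addf G A) = eval interp v A |: img interp v G.
Proof.
apply/setP => x; rewrite !inE; apply/asboolP/orP.
  case=> B [[GB|->] <-]; first by right; apply/asboolP; exists B.
  by left.
case=> [/eqP->|/asboolP[B [GB <-]]]; first by exists A; split=> //; right.
by exists B; split=> //; left.
Qed.

Lemma eval_conjf (V : finType) (C : Type) (ar : C -> nat)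
  (interp : forall c : C, ('I_(ar c) -> V) -> V) f v A B :
  eval (ext_interp interp f) v (conjf A B) =
  f (eval (ext_interp interp f) v A) (eval (ext_interp interp f) v B).
Proof. by []. Qed.

Lemma exists_minimal (V : finType) (one zero : V) models :
  intersective one zero models -> exists L, minimal_rep one zero models L.
Proof.
case=> L0 H0.
suff: forall n L, size L <= n -> is_rep one zero models L ->
  exists L, minimal_rep one zero models L by apply; last exact H0.
elim=> [|n IH] L sL rL.
  by case: rL; rewrite leqn0 in sL; rewrite (eqP sL).
case: (classic (forall L', is_rep one zero models L' -> size L <= size L')).
  by move=> H; exists L; split.
move=> /not_all_ex_not[L' H]; have [rL' /negP] := imply_to_and _ _ H; rewrite -ltnNge => lt.
by apply: (IH L') => //; rewrite -ltnS (leq_trans lt).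
Qed.

Lemma setU1_in (V : finType) (x : V) (A : {set V}) : x \in A -> x |: A = A.
Proof. by move=> xA; apply/setP=> u; rewrite !inE; case: eqP => // ->. Qed.

Lemma redundant (V : finType) (one zero : V) models L p q :
  minimal_rep one zero models L -> p \in L -> q \in L -> q != p ->
  p.1 \subset q.1 -> q.2 \subset p.2 -> False.
Proof.
case=> [[s0 des eqv] mn] pL qL qp pq1 qp2.
have qL' : q \in rem p L by apply: rem_mem.
have rep' : is_rep one zero models (rem p L).
  split.
  - by move: qL'; case: (rem p L).
  - by move=> r /mem_rem; apply: des.
  move=> g d; rewrite eqv; split=> H r rL; first by apply: H; apply: (mem_rem rL).
  case: (eqVneq r p) => [->|rp]; last by apply: H; apply: rem_mem.
  move=> gp; have /set0Pn[u] := H q qL' (subset_trans gp pq1).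
  rewrite inE => /andP[ud uq]; apply/set0Pn; exists u.
  by rewrite inE ud (subsetP qp2).
have := mn _ rep'; rewrite (size_rem pL).
by case: (size L) s0 => // n _; rewrite /= ltnn.
Qed.

Lemma Gbad (V : finType) (one zero : V) models L p (h d : {set V}) :
  minimal_rep one zero models L -> p \in L ->
  p.1 \subset h -> (forall u, u \notin p.2 -> u \in d) ->
  ~ ML L h d ->
  (exists w, (w \in h /\ w \notin p.1) \/ (w \in d /\ w \in p.2)) -> False.
Proof.
move=> mL pL ph Qd /not_all_ex_not[q H] [w Hw].
have [qL H'] := imply_to_and _ _ H.
have [hq /negP] := imply_to_and _ _ H'; rewrite negbK => E.
have qp2 : q.2 \subset p.2.
  apply/subsetP => u uq; apply/negPn/negP => up.
  have : u \in d :&: q.2 by rewrite inE uq Qd.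
  by rewrite (eqP E) inE.
apply: (redundant mL pL qL _ (subset_trans ph hq) qp2).
apply/eqP => qp; subst q.
case: Hw => [[wh wp]|[wd wp]].
  by rewrite (subsetP hq _ wh) in wp.
have : w \in d :&: p.2 by rewrite inE wd wp.
by rewrite (eqP E) inE.
Qed.

Lemma from_facts (V : finType) (one zero : V) models L (f : V -> V -> V) :
  minimal_rep one zero models L ->
  (forall g d x y, models (f x y |: g) d <-> models (y |: (x |: g)) d) ->
  (forall g d x y, models g (f x y |: d) <->
                   models g (x |: d) /\ models g (y |: d)) ->
  conj_compatible (sets_of L).
Proof.
move=> mL L1 R1; have [[_ _ eqv] _] := mL.
apply/cc_sets => x y; exists (f x y) => p pL.
set P := p.1; set Q := p.2; set z := f x y.
have base : ~ ML L P (~: Q).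
  move=> H; have /set0Pn[u] := H p pL (subxx _).
  by rewrite !inE => /andP[/negP].
have nQ : forall u, u \notin Q -> u \in ~: Q by move=> u; rewrite inE.
have nQ' : forall w u, u \notin Q -> u \in w |: ~: Q
  by move=> w u uQ; rewrite !inE uQ orbT.
split.
  apply/idP/idP.
    move=> zP; apply/negPn/negP => nxy.
    apply: (Gbad (h := y |: (x |: P)) (d := ~: Q) mL pL) => //.
    - by apply/subsetP => u uP; rewrite !inE uP !orbT.
    - move=> H; apply: base; apply/eqv; rewrite -(setU1_in zP); apply/L1.
      by apply/eqv.
    move: nxy; rewrite negb_and => /orP[xP|yP].
      by exists x; left; rewrite !inE eqxx orbT.
    by exists y; left; rewrite !inE eqxx.
  case/andP=> xP yP; apply/negPn/negP => nz.
  apply: (Gbad (h := z |: P) (d := ~: Q) mL pL) => //.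
  - by apply/subsetP => u uP; rewrite !inE uP !orbT.
  - move=> H; apply: base; apply/eqv.
    have -> : P = y |: (x |: P) by rewrite (setU1_in xP) (setU1_in yP).
    by apply/L1; apply/eqv.
  by exists z; left; rewrite !inE eqxx.
apply/idP/idP.
  move=> zQ; apply/negPn/negP => nxy.
  apply: (Gbad (h := P) (d := z |: ~: Q) mL pL) => //.
  - exact: nQ'.
  - move=> H; apply: base; apply/eqv; have /R1[Hx Hy] := (proj2 (eqv _ _) H).
    move: nxy; rewrite negb_and => /orP[xQ|yQ].
      by rewrite -(setU1_in (nQ _ xQ)).
    by rewrite -(setU1_in (nQ _ yQ)).
  by exists z; right; rewrite !inE eqxx.
case/andP=> xQ yQ; apply/negPn/negP => nz.
case: (classic (ML L P (x |: ~: Q))) => Hx.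
  apply: (Gbad (h := P) (d := y |: ~: Q) mL pL) => //.
  - exact: nQ'.
  - move=> Hy; apply: base; apply/eqv; rewrite -(setU1_in (nQ _ nz)).
    by apply/R1; split; apply/eqv.
  by exists y; right; rewrite !inE eqxx.
apply: (Gbad (h := P) (d := x |: ~: Q) mL pL) => //.
- exact: nQ'.
by exists x; right; rewrite !inE eqxx.
Qed.

Lemma rep_Gconj (V : finType) (one zero : V) (C : Type) (ar : C -> nat)
  (interp : forall c : C, ('I_(ar c) -> V) -> V) models L :
  is_rep one zero models L -> conj_compatible (sets_of L) ->
  admits_Gconj interp models.
Proof.
case=> _ _ eqv /cc_sets H.
pose f x y := proj1_sig (cid (H x y)).
have fP x y p : p \in L -> _ := proj2_sig (cid (H x y)) p.
exists f => G D A B; rewrite /cons; split.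
  split=> Hc v; apply: (proj2 (eqv _ _)); have := proj1 (eqv _ _) (Hc v);
    rewrite !img_addf eval_conjf => Hm p pL s; apply: (Hm p pL); move: s;
    rewrite !sub1U ?(proj1 (fP _ _ p pL)).
    by case/andP=> bP /andP[aP gP]; rewrite aP bP gP.
  by case/andP=> /andP[aP bP] gP; rewrite aP bP gP.
split.
  move=> Hc; split=> v; apply: (proj2 (eqv _ _)); have := proj1 (eqv _ _) (Hc v);
    rewrite !img_addf eval_conjf => Hm p pL s; move: (Hm p pL s);
    rewrite !I1U ?(proj2 (fP _ _ p pL)).
    by case/orP=> [/andP[-> _]|->] //; rewrite orbT.
  by case/orP=> [/andP[_ ->]|->] //; rewrite orbT.
case=> H1 H2 v; apply: (proj2 (eqv _ _)); have h1 := proj1 (eqv _ _) (H1 v); have h2 := proj1 (eqv _ _) (H2 v).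
move: h1 h2; rewrite !img_addf eval_conjf => h1 h2 p pL s.
move: (h1 p pL s) (h2 p pL s); rewrite !I1U ?(proj2 (fP _ _ p pL)).
case/orP=> [aQ|dQ]; last by rewrite dQ !orbT.
case/orP=> [bQ|dQ]; last by rewrite dQ !orbT.
by rewrite aQ bQ.
Qed.

Lemma cons_const (V : finType) (C : Type) (ar : C -> nat)
  (interp : forall c : C, ('I_(ar c) -> V) -> V) models G D (g d : {set V}) (x0 : V) :
  (forall v, img interp v G = g) -> (forall v, img interp v D = d) ->
  cons interp models G D <-> models g d.
Proof.
move=> eG eD; split; first by move=> H; have := H (fun _ => x0); rewrite eG eD.
by move=> H v; rewrite eG eD.
Qed.

Lemma Gconj_facts (V : finType) (C : Type) (ar : C -> nat)
  (interp : forall c : C, ('I_(ar c) -> V) -> V) models f :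
  constant_expressive interp -> is_Gconj interp models f ->
  (forall g d x y, models (f x y |: g) d <-> models (y |: (x |: g)) d) /\
  (forall g d x y, models g (f x y |: d) <->
                   models g (x |: d) /\ models g (y |: d)).
Proof.
move=> CE Gc.
pose I := ext_interp interp f.
pose ec x := emb (proj1_sig (cid (CE x))).
have evec v x : eval I v (ec x) = x.
  by rewrite /ec eval_emb; apply: (proj2_sig (cid (CE x))).
pose Gam (g : {set V}) := fun F => exists2 x, x \in g & F = ec x.
have imgG v g : img I v (Gam g) = g.
  apply/setP => u; rewrite inE; apply/asboolP/idP.
    by case=> F [[x xg ->] <-]; rewrite evec.
  by move=> ug; exists (ec u); split; [exists u|]; rewrite ?evec.
split=> g d x y.
  have [H1 _] := Gc (Gam g) (Gam d) (ec x) (ec y).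
  have e1 v : img I v (addf (Gam g) (conjf (ec x) (ec y))) = f x y |: g.
    by rewrite img_addf eval_conjf !evec imgG.
  have e2 v : img I v (addf (addf (Gam g) (ec x)) (ec y)) = y |: (x |: g).
    by rewrite !img_addf !evec imgG.
  have e3 v : img I v (Gam d) = d by rewrite imgG.
  split=> H.
    by apply/(cons_const models x e2 e3); apply/H1; apply/(cons_const models x e1 e3).
  by apply/(cons_const models x e1 e3); apply/H1; apply/(cons_const models x e2 e3).
have [_ H1] := Gc (Gam g) (Gam d) (ec x) (ec y).
have e1 v : img I v (addf (Gam d) (conjf (ec x) (ec y))) = f x y |: d.
  by rewrite img_addf eval_conjf !evec imgG.
have e2 v : img I v (addf (Gam d) (ec x)) = x |: d by rewrite img_addf evec imgG.
have e2' v : img I v (addf (Gam d) (ec y)) = y |: d by rewrite img_addf evec imgG.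
have e3 v : img I v (Gam g) = g by rewrite imgG.
split=> H.
  have [Hx Hy] := H1.1 ((cons_const models x e3 e1).2 H).
  by split; [apply/(cons_const models x e3 e2)|apply/(cons_const models x e3 e2')].
case: H => Hx Hy; apply/(cons_const models x e3 e1); apply/H1.
by split; [apply/(cons_const models x e3 e2)|apply/(cons_const models x e3 e2')].
Qed.

Theorem theorem7p4 (V : finType) (one zero : V)
    (C : Type) (ar : C -> nat) (interp : forall c : C, ('I_(ar c) -> V) -> V)
    (models : {set V} -> {set V} -> Prop) :
  one != zero ->
  intersective one zero models ->
  constant_expressive interp ->
  (admits_Gconj interp models <->
     (forall L, minimal_rep one zero models L -> conj_compatible (sets_of L)))
  /\
  ((forall L, minimal_rep one zero models L -> conj_compatible (sets_of L)) <->
     (exists L, is_rep one zero models L /\ conj_compatible (sets_of L))).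
Proof.
move=> _ Hint CE.
have i_ii : admits_Gconj interp models ->
    forall L, minimal_rep one zero models L -> conj_compatible (sets_of L).
  case=> f Gc L mL; have [L1 R1] := Gconj_facts CE Gc.
  exact: (from_facts mL L1 R1).
have ii_iii : (forall L, minimal_rep one zero models L -> conj_compatible (sets_of L)) ->
    exists L, is_rep one zero models L /\ conj_compatible (sets_of L).
  move=> H; have [L mL] := exists_minimal Hint.
  by exists L; split; [exact: mL.1 | exact: H L mL].
have iii_i : (exists L, is_rep one zero models L /\ conj_compatible (sets_of L)) ->
    admits_Gconj interp models.
  by case=> L [rL cc]; apply: rep_Gconj rL cc.
split; split; auto.
Qed.
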